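(* Let $A\in\mathbb{R}^{m\times N}$ with $N=pn$. Let $1<q_2\le q_1\le\infty$ and set $\tilde q=\frac{q_2(q_1-1)}{q_1(q_2-1)}$ (with $\tilde q=\frac{q_2}{q_2-1}$ when $q_1=\infty$). Then for any real number $s$ with $1\le s\le p^{1/\tilde q}$, $$\beta_{q_1,s}(A)\ \ge\ \beta_{q_2,s^{\tilde q}}(A)\ \ge\ s^{-\tilde q}\,\beta_{q_1,s^{\tilde q}}(A).$$
   Context: Every $\mathbf{x}\in\mathbb{R}^N$ is partitioned into $p$ consecutive blocks of length $n$: $\mathbf{x}=[\mathbf{x}_1^T,\dots,\mathbf{x}_p^T]^T$, $\mathbf{x}_i\in\mathbb{R}^n$. Mixed norms: $\lVert\mathbf{x}\rVert_{2,q}=(\sum_{i=1}^p\lVert\mathbf{x}_i\rVert_2^q)^{1/q}$ for $0<q<\infty$, $\lVert\mathbf{x}\rVert_{2,\infty}=\max_i\lVert\mathbf{x}_i\rVert_2$. For nonzero $\mathbf{x}$ and $q\in(1,\infty)$ the $q$-ratio block sparsity is $k_q(\mathbf{x})=\left(\lVert\mathbf{x}\rVert_{2,1}/\lVert\mathbf{x}\rVert_{2,q}\right)^{q/(q-1)}$, and $k_\infty(\mathbf{x})=\lVert\mathbf{x}\rVert_{2,1}/\lVert\mathbf{x}\rVert_{2,\infty}$. For $s\in[1,p]$ and $q\in(1,\infty]$, the $q$-ratio block constrained minimal singular value of $A$ is $$\beta_{q,s}(A)=\min_{\mathbf{z}\neq\mathbf{0},\ k_q(\mathbf{z})\le s}\frac{\lVert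 A\mathbf{z}\rVert_2}{\lVert\mathbf{z}\rVert_{2,q}}.$$ *)

(* Defs.v *)
From HB Require Import structures.
From mathcomp Require Import all_boot all_order all_algebra.
From mathcomp Require Import all_classical all_reals all_analysis.
Set Implicit Arguments. Unset Strict Implicit. Unset Printing Implicit Defensive.
Import Order.TTheory GRing.Theory Num.Theory.
Local Open Scope ring_scope.

Section BlockDefs.
Variable R : realType.
Variables (p n : nat).

Lemma blk_proof (i : 'I_p) (j : 'I_n) : (i * n + j < p * n)%N.
Proof.
case: i j => i Hi [j Hj] /=.
apply: (@leq_trans (i * n + n)); first by rewrite ltn_add2l.
by rewrite -[X in (_ + X <= _)%N]mul1n -mulnDl addn1 leq_mul2r Hi orbT.
Qed.

(* global index of the j-th entry of the i-th block: i*n + j *)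
Definition blk (i : 'I_p) (j : 'I_n) : 'I_(p * n) := Ordinal (blk_proof i j).

Definition block_norm (x : 'cV[R]_(p * n)) (i : 'I_p) : R :=
  Num.sqrt (\sum_(j < n) (x (blk i j) 0) ^+ 2).

Definition mixnorm (q : \bar R) (x : 'cV[R]_(p * n)) : R :=
  match q with
  | EFin r => powR (\sum_(i < p) powR (block_norm x i) r) (r^-1)
  | +oo%E => \big[Num.max/0]_(i < p) block_norm x i
  | -oo%E => 0
  end.

Definition kq (q : \bar R) (x : 'cV[R]_(p * n)) : R :=
  match q with
  | EFin r => powR (mixnorm 1%:E x / mixnorm q x) (r / (r - 1))
  | _ => mixnorm 1%:E x / mixnorm q x
  end.

End BlockDefs.

Definition norm2 (R : realType) (k : nat) (v : 'cV[R]_k) : R :=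
  Num.sqrt (\sum_(i < k) (v i 0) ^+ 2).

(* q-ratio block constrained minimal singular value beta_{q,s}(A)
   (the minimum is attained; we write it as the infimum of the set) *)
Definition beta (R : realType) (m p n : nat) (q : \bar R) (s : R)
    (A : 'M[R]_(m, p * n)) : R :=
  inf [set norm2 (A *m z) / mixnorm q z |
        z in [set z : 'cV[R]_(p * n) | z != 0 /\ kq q z <= s]]%classic.

(* tilde q = q2 (q1 - 1) / (q1 (q2 - 1)); q2/(q2-1) if q1 = oo;
   1 if q1 = q2 = oo (limiting value) *)
Definition qtilde (R : realType) (q1 q2 : \bar R) : R :=
  match q1, q2 with
  | EFin a, EFin b => b * (a - 1) / (a * (b - 1))
  | +oo%E, EFin b => b / (b - 1)
  | _, _ => 1
  end.

(* Main.v *)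
Require Import Defs.
From HB Require Import structures.
From mathcomp Require Import all_boot all_order all_algebra.
From mathcomp Require Import all_classical all_reals all_analysis.
From mathcomp Require Import ring lra zify.
Import Order.TTheory GRing.Theory Num.Theory.
Local Open Scope ring_scope.
Local Open Scope classical_set_scope.
Set Implicit Arguments. Unset Strict Implicit.

Lemma inf_cmp (R : realType) (S T : set R) (c : R) :
  0 <= c -> S !=set0 -> (forall y, T y -> 0 <= y) ->
  (forall x, S x -> exists y, T y /\ c * y <= x) -> c * inf T <= inf S.
Proof.
move=> c0 Sne T0 H; apply: lb_le_inf => // x Sx.
have [y [Ty cy]] := H x Sx.
apply: le_trans cy; apply: ler_wpM2l => //.
apply: ge_inf => //; by exists 0 => z /T0.
Qed.

Section Seq.
Variables (R : realType) (p : nat) (a : 'I_p -> R).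
Hypothesis ha : forall i, 0 <= a i.
Let S r := \sum_i powR (a i) r.
Let L := \sum_i a i.
Let M := \big[Num.max/0]_i a i.

Lemma S_ge0 r : 0 <= S r. Proof. by apply: sumr_ge0 => i _; apply: powR_ge0. Qed.

Lemma term_le_sum (F : 'I_p -> R) i : (forall j, 0 <= F j) -> F i <= \sum_j F j.
Proof.
by move=> F0; rewrite (bigD1 i) //= lerDl; apply: sumr_ge0 => j _.
Qed.

Lemma a_le_N r i : 0 < r -> a i <= powR (S r) r^-1.
Proof.
move=> r0.
have -> : a i = powR (powR (a i) r) r^-1 by rewrite -powRrM mulfV ?gt_eqF // powRr1.
apply: (@ge0_ler_powR _ _ _ (powR (a i) r) (S r)); rewrite ?invr_ge0 ?nnegrE ?powR_ge0 ?S_ge0 //; first exact: ltW.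
by rewrite /S; apply: term_le_sum => j; apply: powR_ge0.
Qed.

Hypothesis (i0 : 'I_p) (hi0 : 0 < a i0).

Lemma S_gt0 r : 0 < S r.
Proof.
rewrite /S; apply: lt_le_trans (@term_le_sum (fun j => powR (a j) r) i0 (fun j => powR_ge0 _ _)).
exact: powR_gt0.
Qed.

Lemma L_gt0 : 0 < L.
Proof. rewrite /L; exact: lt_le_trans hi0 (term_le_sum i0 ha). Qed.

Lemma M_gt0 : 0 < M.
Proof. rewrite /M; exact: lt_le_trans hi0 (le_bigmax _ _ i0). Qed.

Lemma lnS_mono r1 r2 : 0 < r2 -> r2 <= r1 ->
  r1^-1 * ln (S r1) <= r2^-1 * ln (S r2).
Proof.
move=> r20 r21; have r10 : 0 < r1 by exact: lt_le_trans r21.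
have H : S r1 <= S r2 * powR (powR (S r2) r2^-1) (r1 - r2).
  rewrite /S mulr_suml; apply: ler_sum => i _.
  have -> : powR (a i) r1 = powR (a i) r2 * powR (a i) (r1 - r2).
    rewrite -powRD; first by rewrite addrC subrK.
    by rewrite addrC subrK (gt_eqF r10).
  apply: ler_wpM2l; first exact: powR_ge0.
  apply: (@ge0_ler_powR _ _ _ (a i) _); rewrite ?subr_ge0 ?nnegrE ?powR_ge0 //.
  exact: a_le_N.
have Sp r : 0 < S r by exact: S_gt0.
have H2 : ln (S r1) <= r1 * (r2^-1 * ln (S r2)).
  have H' : ln (S r1) <= ln (S r2 * powR (powR (S r2) r2^-1) (r1 - r2)).
    by rewrite ler_ln // posrE // mulr_gt0 // powR_gt0 // powR_gt0.
  move: H'; rewrite lnM ?posrE ?powR_gt0 // !ln_powR => H2; apply: le_trans H2 _.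
  have r2n : r2 != 0 by rewrite gt_eqF.
  by rewrite le_eqVlt; apply/orP; left; apply/eqP; field.
rewrite -(ler_pM2l r10) mulrA mulfV ?gt_eqF // mul1r.
exact: H2.
Qed.

Lemma S1L : S 1 = L.
Proof. by rewrite /S /L; apply: eq_bigr => i _; rewrite powRr1. Qed.

Lemma lnS_le_L r : 1 <= r -> r^-1 * ln (S r) <= ln L.
Proof.
move=> r1; have := @lnS_mono r 1 ltr01 r1.
by rewrite invr1 mul1r S1L.
Qed.

Lemma M_le_N r : 0 < r -> M <= powR (S r) r^-1.
Proof.
move=> r0; rewrite /M; apply: bigmax_le; first exact: powR_ge0.
by move=> i _; apply: a_le_N.
Qed.

Lemma lnM_le r : 0 < r -> ln M <= r^-1 * ln (S r).
Proof.
move=> r0; rewrite -ln_powR ler_ln ?posrE ?M_gt0 ?powR_gt0 ?S_gt0 //.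
exact: M_le_N.
Qed.

Lemma lnM_le_L : ln M <= ln L.
Proof.
rewrite ler_ln ?posrE ?M_gt0 ?L_gt0 //.
rewrite /M; apply: bigmax_le; first exact: ltW L_gt0.
by move=> i _; apply: term_le_sum.
Qed.

Lemma a_le_M i : a i <= M.
Proof. exact: le_bigmax. Qed.

Lemma jensen_inf q2 : 1 < q2 -> ln (S q2) <= ln L + (q2 - 1) * ln M.
Proof.
move=> q21; have q20 : 0 < q2 by exact: lt_trans q21.
have H : S q2 <= L * powR M (q2 - 1).
  rewrite /S /L mulr_suml; apply: ler_sum => i _.
  rewrite -{1}(@mulr_powRB1 _ (a i) q2) //; apply: ler_wpM2l => //.
  apply: (@ge0_ler_powR _ _ _ (a i) _); rewrite ?subr_ge0 ?nnegrE.
  - exact: ltW.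
  - exact: ha.
  - exact: ltW M_gt0.
  - exact: a_le_M.
have H' : ln (S q2) <= ln (L * powR M (q2 - 1)).
  by rewrite ler_ln ?posrE ?S_gt0 ?mulr_gt0 ?L_gt0 ?powR_gt0 ?M_gt0.
by move: H'; rewrite lnM ?posrE ?L_gt0 ?powR_gt0 ?M_gt0 // ln_powR.
Qed.
Lemma jensen q1 q2 : 1 < q2 -> q2 < q1 ->
  ln L + (q1 - 1) / (q2 - 1) * (ln (S q2) - ln L) <= ln (S q1).
Proof.
move=> q21 q12.
have q20 : 0 < q2 by exact: lt_trans q21.
have q10 : 0 < q1 by exact: lt_trans q12.
have d2 : 0 < q2 - 1 by rewrite subr_gt0.
set g := (q1 - 1) / (q2 - 1).
have g1 : 1 < g by rewrite /g ltr_pdivlMr // mul1r ltrD2r.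
have g0 : 0 < g by exact: lt_trans g1.
have gd : 0 < g - 1 by rewrite subr_gt0.
have gn : g != 0 by rewrite gt_eqF.
have gdn : g - 1 != 0 by rewrite gt_eqF.
have g'0 : 0 < g / (g - 1) by rewrite divr_gt0.
have Lp := L_gt0.
set m := S q2 / L.
have m0 : 0 < m by rewrite divr_gt0 ?S_gt0.
set C := powR (powR m (g - 1)) (g / (g - 1)) / (g / (g - 1)).
have key i : a i * (powR (a i) (q2 - 1) * powR m (g - 1)) <=
    a i * (powR (powR (a i) (q2 - 1)) g / g + C).
  apply: ler_wpM2l => //; apply: conjugate_powR => //; try exact: powR_ge0.
  by field; rewrite gn gdn.
have Hs : \sum_i a i * (powR (a i) (q2 - 1) * powR m (g - 1)) <=
    \sum_i a i * (powR (powR (a i) (q2 - 1)) g / g + C).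
  by apply: ler_sum => i _; exact: key.
have E1 : \sum_i a i * (powR (a i) (q2 - 1) * powR m (g - 1)) = S q2 * powR m (g - 1).
  rewrite /S mulr_suml; apply: eq_bigr => i _; rewrite mulrA mulr_powRB1 //.
have E2 : \sum_i a i * (powR (powR (a i) (q2 - 1)) g / g + C) = S q1 / g + L * C.
  rewrite /S /L !mulr_suml -big_split /=; apply: eq_bigr => i _.
  rewrite mulrDr mulrA -powRrM.
  have -> : (q2 - 1) * g = q1 - 1 by rewrite /g; field; rewrite gt_eqF.
  by rewrite mulr_powRB1.
rewrite E1 E2 in Hs.
have EC : C = powR m g * ((g - 1) / g).
  rewrite /C -powRrM.
  have -> : (g - 1) * (g / (g - 1)) = g by field; repeat (apply/andP; split).
  by field; rewrite gn gdn.
have ES : S q2 * powR m (g - 1) = L * powR m g.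
  rewrite -(mulr_powRB1 (ltW m0) g0) mulrA; congr (_ * _).
  by rewrite /m; field; rewrite gt_eqF.
rewrite ES EC in Hs.
have HX : L * powR m g <= S q1.
  set X := L * powR m g in Hs *.
  have : X - L * (powR m g * ((g - 1) / g)) <= S q1 / g by rewrite lerBlDr.
  have -> : X - L * (powR m g * ((g - 1) / g)) = X / g by rewrite /X; field.
  by rewrite ler_pM2r ?invr_gt0.
have : ln (L * powR m g) <= ln (S q1).
  by rewrite ler_ln ?posrE ?S_gt0 ?mulr_gt0 ?powR_gt0.
rewrite lnM ?posrE ?powR_gt0 // ln_powR /m ln_div ?posrE ?S_gt0 //.
Qed.
Definition nu (q : \bar R) := match q with EFin r => r^-1 * ln (S r) | _ => ln M end.
Definition cq (q : \bar R) := match q with EFin r => r / (r - 1) | _ => 1 end.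

Lemma nuA q1 q2 : (1%:E < q2)%E -> (q2 <= q1)%E -> nu q1 <= nu q2.
Proof.
case: q2 => [r2| |] //; case: q1 => [r1| |] //=; rewrite ?lte_fin ?lee_fin.
- move=> h1 h2; apply: lnS_mono => //; exact: lt_trans h1.
- move=> h1 _; apply: lnM_le; exact: lt_trans h1.
Qed.

Lemma nuB q : (1%:E < q)%E -> nu q <= ln L.
Proof.
case: q => [r| |] //=; rewrite ?lte_fin.
- move=> h; apply: lnS_le_L; exact: ltW.
- move=> _; exact: lnM_le_L.
Qed.

Lemma cqE q : (1%:E < q)%E -> 1 <= cq q.
Proof.
case: q => [r| |] //=; rewrite ?lte_fin => h.
have d : 0 < r - 1 by rewrite subr_gt0.
by rewrite ler_pdivlMr // mul1r lerBlDr lerDl.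
Qed.

Lemma nuC q1 q2 : (1%:E < q2)%E -> (q2 <= q1)%E ->
  cq q1 * (ln L - nu q1) <= cq q2 * (ln L - nu q2).
Proof.
case: q2 => [r2| |] //; case: q1 => [r1| |] //=; rewrite ?lte_fin ?lee_fin.
- move=> h1 h2.
  have [e|ne] := eqVneq r1 r2; first by rewrite e.
  have h12 : r2 < r1 by rewrite lt_neqAle eq_sym ne.
  have J := @jensen r1 r2 h1 h12.
  have d1 : 0 < r1 - 1 by rewrite subr_gt0; exact: lt_trans h12.
  have d2 : 0 < r2 - 1 by rewrite subr_gt0.
  have r1n : r1 != 0 by rewrite gt_eqF // (lt_trans _ h12) // (lt_trans ltr01).
  have r2n : r2 != 0 by rewrite gt_eqF // (lt_trans ltr01).
  have d1n : r1 - 1 != 0 by rewrite gt_eqF.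
  have d2n : r2 - 1 != 0 by rewrite gt_eqF.
  set l := ln L in J *; set X := ln (S r1) in J *; set Y := ln (S r2) in J *.
  have -> : r1 / (r1 - 1) * (l - r1^-1 * X) = (r1 * l - X) / (r1 - 1) by field; repeat (apply/andP; split).
  have -> : r2 / (r2 - 1) * (l - r2^-1 * Y) =
      (r1 * l - (l + (r1 - 1) / (r2 - 1) * (Y - l))) / (r1 - 1) by field; repeat (apply/andP; split).
  by rewrite ler_pM2r ?invr_gt0 // lerD2l lerN2.
- move=> h1 _.
  have J := @jensen_inf r2 h1.
  have d2 : 0 < r2 - 1 by rewrite subr_gt0.
  have r2n : r2 != 0 by rewrite gt_eqF // (lt_trans ltr01).
  have d2n : r2 - 1 != 0 by rewrite gt_eqF.
  set l := ln L in J *; set X := ln M in J *; set Y := ln (S r2) in J *.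
  have -> : r2 / (r2 - 1) * (l - r2^-1 * Y) = (r2 * l - Y) / (r2 - 1) by field; repeat (apply/andP; split).
  have -> : 1 * (l - X) = (r2 * l - (l + (r2 - 1) * X)) / (r2 - 1) by field; repeat (apply/andP; split).
  by rewrite ler_pM2r ?invr_gt0 // lerD2l lerN2.
Qed.

Lemma nuD q1 q2 : (1%:E < q2)%E -> (q2 <= q1)%E ->
  cq q2 = qtilde q1 q2 * cq q1.
Proof.
case: q2 => [r2| |] //; case: q1 => [r1| |] //=; rewrite ?lte_fin ?lee_fin.
- move=> h1 h2.
  have d1 : 0 < r1 - 1 by rewrite subr_gt0; exact: lt_le_trans h2.
  have d2 : 0 < r2 - 1 by rewrite subr_gt0.
  have r1n : r1 != 0 by rewrite gt_eqF // (lt_le_trans _ h2) // (lt_trans ltr01).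
  have d1n : r1 - 1 != 0 by rewrite gt_eqF.
  have d2n : r2 - 1 != 0 by rewrite gt_eqF.
  by field; repeat (apply/andP; split).
- by move=> _ _; rewrite mulr1.
- by move=> _ _; rewrite mul1r.
Qed.
End Seq.

Lemma powE (R : realType) (y t : R) : 0 < y -> powR y t = expR (t * ln y).
Proof. by move=> y0; rewrite /powR gt_eqF. Qed.

Section Vec.
Variables (R : realType) (p n : nat) (x : 'cV[R]_(p * n)).
Let a := block_norm x.
Lemma ha : forall i, 0 <= a i. Proof. by move=> i; apply: sqrtr_ge0. Qed.

Lemma mix1 : mixnorm 1%:E x = \sum_i a i.
Proof.
rewrite /= invr1 powRr1; last by apply: sumr_ge0 => i _; apply: powR_ge0.
by apply: eq_bigr => i _; rewrite powRr1 // ha.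
Qed.

Hypotheses (i0 : 'I_p) (hi0 : 0 < a i0).

Lemma mix_nu q : (1%:E < q)%E -> mixnorm q x = expR (nu a q).
Proof.
case: q => [r| |] //= _.
  by rewrite powE // (S_gt0 hi0).
by rewrite lnK // posrE (M_gt0 hi0).
Qed.

Lemma kq_nu q : (1%:E < q)%E ->
  kq q x = expR (cq q * (ln (\sum_i a i) - nu a q)).
Proof.
move=> hq; have Lp := L_gt0 ha hi0.
have E : mixnorm 1%:E x / mixnorm q x = expR (ln (\sum_i a i) - nu a q).
  by rewrite mix1 (mix_nu hq) expRD expRN lnK.
case: q hq E => [r| |] //= hq E.
  by rewrite E powE ?expR_gt0 // expRK mulrC.
by rewrite E mul1r.
Qed.
End Vec.

Section Vec2.
Variables (R : realType) (p n : nat) (x : 'cV[R]_(p * n)).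
Variables (q1 q2 : \bar R) (s : R).
Hypotheses (hq2 : (1%:E < q2)%E) (h21 : (q2 <= q1)%E) (hs : 1 <= s).
Let a := block_norm x.
Let qt := qtilde q1 q2.

Lemma hq1 : (1%:E < q1)%E. Proof. exact: lt_le_trans hq2 h21. Qed.

Lemma qt_ge0 : 0 <= qt.
Proof.
have c1 := cqE hq1; have c2 := cqE hq2.
have := nuD hq2 h21; rewrite -/qt => E.
have c10 : 0 < cq q1 by exact: lt_le_trans ltr01 c1.
have -> : qt = cq q2 / cq q1 by rewrite E mulfK // gt_eqF.
by rewrite divr_ge0 // ltW // (lt_le_trans ltr01).
Qed.

Lemma s0 : 0 < s. Proof. exact: lt_le_trans ltr01 hs. Qed.

Lemma mix0 q : (forall i, a i = 0) -> (1%:E < q)%E -> mixnorm q x = 0.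
Proof.
move=> H; case: q => [r| |] //=; rewrite ?lte_fin => hr.
  have r0 : r != 0 by rewrite gt_eqF // (lt_trans ltr01).
  rewrite big1 ?powR0 ?invr_eq0 //.
  by move=> i _; rewrite -/a H powR0.
elim/big_ind: _ => //; first by move=> u v -> ->; rewrite maxxx.
Qed.

Lemma kq0 q : (forall i, a i = 0) -> (1%:E < q)%E -> kq q x = 0.
Proof.
move=> H hq; have := mix0 H hq; case: q hq => [r| |] //= hq ->.
  rewrite invr0 mulr0 powR0 //.
  have r1 : 0 < r - 1 by rewrite subr_gt0 -lte_fin.
  by rewrite mulf_neq0 ?invr_eq0 ?gt_eqF // (lt_trans ltr01) // -lte_fin.
by rewrite invr0 mulr0.
Qed.

Lemma part1_vec (v : R) : 0 <= v -> kq q1 x <= s ->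
  kq q2 x <= powR s qt /\ v / mixnorm q2 x <= v / mixnorm q1 x.
Proof.
move=> v0 hk.
have [[i hi]|hn] := pselect (exists i, 0 < a i); last first.
  have H i : a i = 0.
    by apply/eqP; rewrite eq_le ha andbT leNgt; apply/negP => h; apply: hn; exists i.
  by rewrite kq0 // !mix0 ?hq1 //; split; [exact: powR_ge0 | exact: lexx].
have ha' := @ha _ _ _ x.
have A := nuA ha' hi hq2 h21.
have C1 := cqE hq1; have C2 := cqE hq2.
have D := nuD hq2 h21.
split.
  rewrite (kq_nu hi hq2) powE ?s0 // ler_expR.
  move: hk; rewrite (kq_nu hi hq1) -{1}(lnK (x:=s)) ?posrE ?s0 // ler_expR => hk.
  apply: le_trans (_ : cq q2 * (ln (\sum_i a i) - nu a q1) <= _).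
    by rewrite ler_wpM2l ?(le_trans ler01) // lerD2l lerN2.
  by rewrite D -/qt -mulrA ler_wpM2l // qt_ge0.
rewrite (mix_nu hi hq1) (mix_nu hi hq2) -!expRN ler_wpM2l // ler_expR lerN2 //.
Qed.

Lemma part2_vec (v : R) : 0 <= v -> kq q2 x <= powR s qt ->
  kq q1 x <= powR s qt /\ powR s (- qt) * (v / mixnorm q1 x) <= v / mixnorm q2 x.
Proof.
move=> v0 hk.
have [[i hi]|hn] := pselect (exists i, 0 < a i); last first.
  have H i : a i = 0.
    by apply/eqP; rewrite eq_le ha andbT leNgt; apply/negP => h; apply: hn; exists i.
  by rewrite kq0 ?hq1 // !mix0 ?hq1 // powR_ge0 invr0 !mulr0.
have ha' := @ha _ _ _ x.
have C := nuC ha' hi hq2 h21.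
have B1 := nuB ha' hi hq1; have B2 := nuB ha' hi hq2.
have C1 := cqE hq1.
move: hk; rewrite (kq_nu hi hq2) powE ?s0 // ler_expR => hk.
have hk1 : cq q1 * (ln (\sum_i a i) - nu a q1) <= qt * ln s by exact: le_trans C hk.
split.
  by rewrite (kq_nu hi hq1) ler_expR.
rewrite (mix_nu hi hq1) (mix_nu hi hq2) -!expRN powE ?s0 // mulrCA -expRD.
rewrite ler_wpM2l // ler_expR.
have : ln (\sum_i a i) - nu a q1 <= qt * ln s.
  apply: le_trans hk1; rewrite -{1}(mul1r (_ - _)) ler_wpM2r // subr_ge0 //.
move: B2; set l := ln _; set u1 := nu a q1; set u2 := nu a q2; move=> B2 H.
rewrite mulNr; lra.
Qed.
End Vec2.

Lemma single_nu (R : realType) (p : nat) (a : 'I_p -> R) (i0 : 'I_p) :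
  (forall i, 0 <= a i) -> 0 < a i0 -> (forall i, i != i0 -> a i = 0) ->
  forall q, (1%:E < q)%E -> nu a q = ln (\sum_i a i).
Proof.
move=> ha hi0 hz.
have L1 : \sum_i a i = a i0.
  by rewrite (bigD1 i0) //= big1 ?addr0 // => i /hz.
move=> [r| |] //=; rewrite ?lte_fin => hr; rewrite L1.
  have r0 : r != 0 by rewrite gt_eqF // (lt_trans ltr01).
  rewrite (bigD1 i0) //= big1 ?addr0; last by move=> i /hz ->; rewrite powR0.
  by rewrite ln_powR mulrA mulVf // mul1r.
rewrite (bigmaxD1 i0) //.
have -> : \big[Num.max/0]_(i | true && (i != i0)) a i = 0.
  by elim/big_ind: _ => // u v -> ->; rewrite maxxx.

by rewrite max_l // ltW.
Qed.

Lemma mix_ge0 (R : realType) (p n : nat) (q : \bar R) (x : 'cV[R]_(p * n)) :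
  0 <= mixnorm q x.
Proof.
case: q => [r| |] //=; first exact: powR_ge0.
elim/big_ind: _ => //; first by move=> u v hu hv; rewrite le_max hu.
by move=> i _; exact: sqrtr_ge0.
Qed.

Unset Implicit Arguments.
Theorem proposition2 (R : realType) (m p n : nat) (A : 'M[R]_(m, p * n))
    (q1 q2 : \bar R) (s : R) :
  (1%:E < q2)%E -> (q2 <= q1)%E ->
  1 <= s -> s <= powR p%:R ((qtilde q1 q2)^-1) ->
  beta q1 s A >= beta q2 (powR s (qtilde q1 q2)) A /\
  beta q2 (powR s (qtilde q1 q2)) A >=
    powR s (- qtilde q1 q2) * beta q1 (powR s (qtilde q1 q2)) A.
Proof.
move=> hq2 h21 hs _.
set qt := qtilde q1 q2.
have hq1 := hq1 hq2 h21.
have s0 : 0 < s by exact: lt_le_trans ltr01 hs.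
have qt0 : 0 <= qt by exact: qt_ge0.
have sqt1 : 1 <= powR s qt.
  rewrite powE //; apply: le_trans (expR_ge1Dx _); rewrite lerDl mulr_ge0 //.
  exact: ln_ge0.
have [[z0 z0n]|hno] := pselect (exists z : 'cV[R]_(p * n), z != 0); last first.
  have E q t : [set norm2 (A *m z) / mixnorm q z |
        z in [set z : 'cV[R]_(p * n) | z != 0 /\ kq q z <= t]] = set0.
    by apply/seteqP; split => // y [z [hz _] _]; apply: hno; exists z.
  by rewrite /beta !E inf0 mulr0.
have pn : (0 < p * n)%N.
  rewrite lt0n; apply/negP => /eqP E; move: z0n; apply/negP; rewrite negbK.
  by apply/eqP/matrixP => i j; have := ltn_ord i; rewrite {2}E.
move: (pn); rewrite muln_gt0 => /andP[pp np].
pose i0 : 'I_p := Ordinal pp.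
pose z1 : 'cV[R]_(p * n) := \col_k (if (k < n)%N then 1 else 0).
have ha1 : forall i, 0 <= block_norm z1 i by move=> i; apply: sqrtr_ge0.
have hz1 i j : z1 (blk i j) 0 = if (i * n + j < n)%N then 1 else 0 by rewrite mxE.
have hi0 : 0 < block_norm z1 i0.
  rewrite /block_norm sqrtr_gt0 (eq_bigr (fun _ => 1)); last first.
    by move=> j _; rewrite hz1 /= mul0n add0n ltn_ord expr1n.
  by rewrite sumr_const card_ord ltr0n.
have hzo : forall i, i != i0 -> block_norm z1 i = 0.
  move=> i hi; rewrite /block_norm big1 ?sqrtr0 // => j _.
  rewrite hz1; case: ifP => //; last by rewrite expr0n.
  have : (0 < val i)%N by rewrite lt0n; apply: contraNneq hi => h; apply/eqP/val_inj.
  move=> h1 h2; have h3 : (n <= i * n)%N by rewrite leq_pmull.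
  by move: h2; rewrite ltnNge (leq_trans h3 (leq_addr _ _)).
have kz1 q : (1%:E < q)%E -> kq q z1 = 1.
  move=> hq; rewrite (kq_nu hi0 hq) (single_nu ha1 hi0 hzo hq).
  by rewrite subrr mulr0 expR0.
have z1n : z1 != 0.
  apply/negP => /eqP/matrixP/(_ (Ordinal pn) 0); rewrite !mxE /= np => /eqP.
  by rewrite oner_eq0.
have T0 q t y : [set norm2 (A *m z) / mixnorm q z |
        z in [set z : 'cV[R]_(p * n) | z != 0 /\ kq q z <= t]] y -> 0 <= y.
  by move=> [z _ <-]; rewrite divr_ge0 ?mix_ge0 // sqrtr_ge0.
split.
  rewrite -[X in X <= _]mul1r; apply: inf_cmp => //.
  - exists (norm2 (A *m z1) / mixnorm q1 z1); exists z1 => //.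
    by split => //; rewrite kz1.
  - exact: T0.
  - move=> _ [z [zn hk] <-].
    have [k2 v2] := part1_vec hq2 h21 hs (sqrtr_ge0 (\sum_(i < m) ((A *m z) i 0) ^+ 2)) hk.
    exists (norm2 (A *m z) / mixnorm q2 z); split; last by rewrite mul1r.
    by exists z.
apply: inf_cmp => //.
- exact: powR_ge0.
- exists (norm2 (A *m z1) / mixnorm q2 z1); exists z1 => //.
  by split => //; rewrite kz1.
- exact: T0.
- move=> _ [z [zn hk] <-].
  have [k1 v1] := part2_vec hq2 h21 hs (sqrtr_ge0 (\sum_(i < m) ((A *m z) i 0) ^+ 2)) hk.
  exists (norm2 (A *m z) / mixnorm q1 z); split => //.
  by exists z.
Qed.
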